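(* For every simple, undirected, connected graph $\Gamma$ with at least two vertices, there exists a triple Roman dominating function of $\Gamma$ of minimum weight $\gamma_{[3R]}(\Gamma)$ that assigns the value $1$ to no vertex.
   Context: For a graph $\Gamma=(V,E)$ and $h:V\to\{0,1,2,3,4\}$, let $AN(v)=\{w\in N(v):h(w)\ge 1\}$, $AN[v]=AN(v)\cup\{v\}$ and $h(S)=\sum_{u\in S}h(u)$. $h$ is a triple Roman dominating function (3RDF) if every $v$ with $h(v)<3$ satisfies $h(AN[v])\ge|AN(v)|+3$. The triple Roman domination number $\gamma_{[3R]}(\Gamma)$ is the minimum weight $h(V)$ of a 3RDF of $\Gamma$. *)

(* Defs.v *)
From mathcomp Require Import all_boot all_order.
Set Implicit Arguments. Unset Strict Implicit. Unset Printing Implicit Defensive.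

Section TRD.
Variables (T : finType) (e : rel T).

Definition simple_graph := symmetric e /\ irreflexive e.
Definition connected_graph := forall x y : T, connect e x y.

Definition AN (h : {ffun T -> 'I_5}) (v : T) : {set T} :=
  [set w | e v w & 1 <= h w].
Definition ANc (h : {ffun T -> 'I_5}) (v : T) : {set T} := v |: AN h v.

Definition hsum (h : {ffun T -> 'I_5}) (S : {set T}) : nat :=
  \sum_(u in S) (h u : nat).

Definition is_3RDF (h : {ffun T -> 'I_5}) : bool :=
  [forall v, (h v < 3) ==> (hsum h (ANc h v) >= #|AN h v| + 3)].

Definition weight (h : {ffun T -> 'I_5}) : nat := hsum h [set: T].

(* gamma_[3R] : minimum weight of a 3RDF (the constant-4 function is always
   a 3RDF, so the minimum below is over a nonempty set; 4 * #|T| is an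
   upper bound used as the neutral element of minn). *)
Definition gamma3R : nat :=
  \big[minn/(4 * #|T|)]_(h : {ffun T -> 'I_5} | is_3RDF h) weight h.

End TRD.

(* Main.v *)
Require Import Defs.
From mathcomp Require Import all_boot all_order.
From mathcomp Require Import zify.
Set Implicit Arguments. Unset Strict Implicit. Unset Printing Implicit Defensive.

Section Aux.
Variables (T : finType) (e : rel T).
Hypothesis irr : irreflexive e.

Definition S3 (h : {ffun T -> 'I_5}) v := \sum_(u | e v u) (h u : nat).-1.

Lemma hsumE h v : hsum h (ANc e h v) = h v + S3 h v + #|AN e h v|.
Proof.
rewrite /hsum /ANc big_setU1 /=; last by rewrite inE irr.
rewrite -addnA; congr (_ + _).
transitivity (\sum_(u in AN e h v) ((h u : nat).-1 + 1)).
  apply: eq_bigr => u; rewrite inE => /andP[_ hu]; rewrite addn1 prednK //.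
rewrite big_split /= sum1_card; congr (_ + _).
rewrite /S3 big_mkcond [RHS]big_mkcond /=; apply: eq_bigr => u _; rewrite inE.
by case: (e v u) => //=; case: (h u) => -[|k] ?.
Qed.

Lemma is3P h : is_3RDF e h = [forall v, 3 <= h v + S3 h v].
Proof.
rewrite /is_3RDF; apply: eq_forallb => v /=; rewrite hsumE.
rewrite [_ + #|_|]addnC leq_add2l.
by case: ltnP => //= H; apply/esym; apply: leq_trans H (leq_addr _ _).
Qed.

Hypothesis sym : symmetric e.

Lemma step h v : is_3RDF e h -> (h v : nat) = 1 ->
  exists h', [/\ is_3RDF e h', weight h' <= weight h &
     #|[set u | (h' u : nat) == 1]| < #|[set u | (h u : nat) == 1]|].
Proof.
move=> H3 hv1; have := H3; rewrite is3P => /forallP /(_ v); rewrite hv1 => Hv.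
have [w /andP[evw hw2]] : exists w, e v w && (2 <= h w).
  apply/existsP; apply/contraT; rewrite negb_exists => /forallP Hn.
  move: Hv; rewrite /S3 big1 // => u evu; have := Hn u; rewrite evu /=.
  by case: (h u) => -[|[|k]] ? //=.
have wv : w != v by apply/eqP => wv; move: evw; rewrite wv irr.
pose h' := [ffun u => if u == v then (ord0 : 'I_5) else
             if u == w then (inord (minn (h w).+1 4) : 'I_5) else h u].
have h'v : (h' v : nat) = 0 by rewrite ffunE eqxx.
have h'w : (h' w : nat) = minn (h w).+1 4.
  by rewrite ffunE (negbTE wv) eqxx inordK // ltnS geq_minr.
have h'o u : u != v -> u != w -> h' u = h u.
  by move=> /negbTE uv /negbTE uw; rewrite ffunE uv uw.
have hwb := ltn_ord (h w).
have mono u : (h u : nat).-1 <= (h' u : nat).-1.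
  case: (eqVneq u v) => [->|uv]; first by rewrite hv1 h'v.
  case: (eqVneq u w) => [->|uw]; first by rewrite h'w; lia.
  by rewrite h'o.
have Smono x : S3 h x <= S3 h' x by apply: leq_sum => u _; exact: mono.
exists h'; split.
- rewrite is3P; apply/forallP => x.
  case: (eqVneq x v) => [->|xv].
    rewrite h'v add0n.
    have E1 : S3 h v = (h w : nat).-1 + \sum_(u | e v u && (u != w)) (h u : nat).-1.
      by rewrite /S3 (bigD1 w).
    have E2 : S3 h' v = (h' w : nat).-1 + \sum_(u | e v u && (u != w)) (h' u : nat).-1.
      by rewrite /S3 (bigD1 w).
    have : \sum_(u | e v u && (u != w)) (h u : nat).-1 <=
           \sum_(u | e v u && (u != w)) (h' u : nat).-1 by apply: leq_sum => u _.
    move: Hv; rewrite E1 E2 h'w; lia.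
  have hx : (h x : nat) <= h' x.
    case: (eqVneq x w) => [->|xw]; first by rewrite h'w; lia.
    by rewrite h'o.
  have := H3; rewrite is3P => /forallP /(_ x) Hx; have := Smono x; lia.
- have split g : weight g = g v + g w + \sum_(u | (u != v) && (u != w)) (g u : nat).
    rewrite /weight /hsum (bigD1 v) //= (bigD1 w) ?inE //= addnA; congr (_ + _).
    by apply: eq_bigl => u; rewrite in_setT.
  rewrite !split (eq_bigr (fun u => h u : nat)); last first.
    by move=> u /andP[uv uw]; rewrite h'o.
  rewrite h'v h'w hv1; rewrite leq_add2r; lia.
- apply: proper_card; apply/properP; split.
    apply/subsetP => u; rewrite !inE.
    case: (eqVneq u v) => [->|uv]; first by rewrite h'v.
    case: (eqVneq u w) => [->|uw]; first by rewrite h'w => /eqP; lia.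
    by rewrite h'o.
  by exists v; rewrite !inE ?hv1 ?h'v.
Qed.

End Aux.

Lemma gamma_lb (T : finType) (e : rel T) h : is_3RDF e h -> gamma3R e <= weight h.
Proof.
move=> H; rewrite /gamma3R.
have : h \in index_enum {ffun T -> 'I_5} by rewrite mem_index_enum.
elim: (index_enum _) => [//|a r IHr]; rewrite inE big_cons.
case/orP=> [/eqP <-|hr]; first by rewrite H geq_minl.
by case: ifP => _; [apply: leq_trans (geq_minr _ _) _|]; exact: IHr.
Qed.

Lemma gamma_att (T : finType) (e : rel T) : irreflexive e ->
  exists h, is_3RDF e h /\ weight h = gamma3R e.
Proof.
move=> irr.
pose h4 := [ffun _ : T => (ord_max : 'I_5)].
have H4 : is_3RDF e h4 by rewrite is3P //; apply/forallP => x; rewrite ffunE.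
have : (fun m => m = 4 * #|T| \/ exists h, is_3RDF e h /\ weight h = m) (gamma3R e).
  rewrite /gamma3R; apply: (big_ind (fun m => m = 4 * #|T| \/ exists h, is_3RDF e h /\ weight h = m)) => [|x y Kx Ky|h Hh]; first by left.
  - by rewrite /minn; case: ifP.
  - by right; exists h.
case=> [->|[h [H Hh]]]; last by exists h; rewrite Hh.
exists h4; split=> //.
rewrite /weight /hsum (eq_bigr (fun _ => 4)) => [|u _]; last by rewrite ffunE.
by rewrite sum_nat_const cardsT mulnC.
Qed.

Theorem proposition17 (T : finType) (e : rel T) :
  simple_graph e -> connected_graph e -> 2 <= #|T| ->
  exists h : {ffun T -> 'I_5},
    [/\ is_3RDF e h, weight h = gamma3R e & forall v : T, (h v : nat) != 1].
Proof.
move=> [sym irr] _ _.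
have [h [H3 Hw]] := gamma_att irr.
suff: forall n h, is_3RDF e h -> weight h = gamma3R e ->
    #|[set u | (h u : nat) == 1]| < n ->
  exists h : {ffun T -> 'I_5},
    [/\ is_3RDF e h, weight h = gamma3R e & forall v : T, (h v : nat) != 1].
  by apply; eauto.
elim=> [//|n IH] {H3 Hw} h H3 Hw Hc.
case: (pickP (fun v => (h v : nat) == 1)) => [v /eqP hv1 | none].
  have [h' [H3' Hw' Hc']] := step irr H3 hv1.
  apply: (IH h') => //.
    by apply/eqP; rewrite eqn_leq gamma_lb // andbT -Hw.
  exact: leq_trans Hc' Hc.
by exists h; split=> // v; rewrite none.
Qed.
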